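(* Let $G=(V,E,\gamma,c)$ be a typed DAG task executed on a platform with $M_s\ge1$ cores of each type $s\in S$ under a work-conserving scheduling algorithm. Let $\pi=(\tau_1,\dots,\tau_k)$ be a critical path of an arbitrary execution sequence of $G$ with finish times $f(\cdot)$. Set $f(\tau_0):=0$; for $1\le i\le k$ let $y_i$ be the total length of the time within $[f(\tau_{i-1}),f(\tau_i))$ during which $\tau_i$ is not executing, and for $s\in S$ let $\mathcal{Y}_s=\sum_{i:\gamma(\tau_i)=s}y_i$. Then for every $s\in S$, \[ \mathcal{Y}_s\le \frac{1}{M_s}\sum_{v\in \mathrm{ivs}(\pi,s)}c(v). \]
   Context: A typed DAG task is $G=(V,E,\gamma,c)$ where $(V,E)$ is a finite directed acyclic graph with a unique source $v_{src}$ and a unique sink $v_{snk}$, $S$ is a finite set of core types, $\gamma:V\to S$ gives the type of each vertex, and $c:V\to\mathbb{R}_{\ge0}$ gives the WCET of each vertex. The platform has $M_s\ge1$ cores of type $s$. $\mathrm{pre}(u)$, $\mathrm{ans}(u)$, $\mathrm{des}(u)$ denote the (immediate) predecessors, ancestors and descendants of $u$. A complete path is a path from $v_{src}$ to $v_{snk}$. For $v\in V$, $\mathrm{par}(v)=\{u\in V: u\ne v,\ \gamma(u)=\gamma(v),\ u\notin \mathrm{ans}(v)\cup\mathrm{des}(v)\}$. For a path $\pi=(\tau_1,\dots,\tau_k)$ and $s\in S$, $\mathrm{ivs}(\pi,s)=\bigcup_{i:\gamma(\tau_i)=s}\mathrm{par}(\tau_i)$. Runtime model: a vertex becomes eligible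 when all its predecessors have finished (the source at time $0$); a vertex $v$ may only execute on cores of type $\gamma(v)$, one core at a time, for a total of at most $c(v)$ time units. Scheduling is work-conserving: an eligible unfinished vertex of type $s$ must be executing whenever some core of type $s$ is available. An execution sequence is a resulting trace; $f(v)$ is the finish time of $v$. A critical path of an execution sequence is a complete path $(\tau_1,\dots,\tau_k)$ with $f(\tau_{i-1})=\max_{u\in\mathrm{pre}(\tau_i)}f(u)$ for all $2\le i\le k$. *)

(* Defs.v *)
From mathcomp Require Import all_boot all_order all_algebra.
Set Implicit Arguments. Unset Strict Implicit. Unset Printing Implicit Defensive.
Import Order.TTheory GRing.Theory Num.Theory.
Local Open Scope ring_scope.

Section TypedDAG.
Variables (R : realFieldType) (V S : finType).
Variables (E : rel V) (gamma : V -> S) (c : V -> R) (M : S -> nat).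

Definition acyclic := forall u v, E u v -> ~~ connect E v u.
Definition unique_source (src : V) := forall v, (forall u, ~~ E u v) <-> v = src.
Definition unique_sink (snk : V) := forall v, (forall u, ~~ E v u) <-> v = snk.

Definition typed_dag_task (src snk : V) :=
  [/\ acyclic, unique_source src, unique_sink snk & forall v, 0 <= c v].

Definition par (v : V) : {set V} :=
  [set u | [&& u != v, gamma u == gamma v, ~~ connect E u v & ~~ connect E v u]].

(* An execution sequence consists of n consecutive time segments
   [seg_start j, seg_end j) (starting at time 0) of lengths d j > 0, with X j the
   set of vertices executing (each on one core) during segment j, and finish
   times f. *)
Section Exec.
Variables (n : nat) (d : 'I_n -> R) (X : 'I_n -> {set V}) (f : V -> R).

Definition seg_start (j : 'I_n) : R := \sum_(i < n | (i < j)%N) d i.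
Definition seg_end (j : 'I_n) : R := seg_start j + d j.

Definition ready (v : V) : R := \big[Num.max/0]_(u | E u v) f u.

Definition load (j : 'I_n) (s : S) : nat := #|[set v in X j | gamma v == s]|.

Definition work_conserving :=
  forall (j : 'I_n) (t : R) (v : V),
    seg_start j <= t < seg_end j -> ready v <= t < f v -> v \notin X j ->
    (M (gamma v) <= load j (gamma v))%N.

Definition execution_sequence :=
  [/\ forall j, 0 < d j,
      (* at most M_s cores of type s; vertices only run on their own type *)
      forall j s, (load j s <= M s)%N,
      forall j v, v \in X j -> ready v <= seg_start j /\ seg_end j <= f v,
      forall v, \sum_(j | v \in X j) d j <= c v &
      (* f v is the finish time: the end of its last execution, or its
         eligibility time if it executes for zero time *)
      forall v, f v = ready v \/ exists j, v \in X j /\ f v = seg_end j]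
  /\ work_conserving.

Definition critical_path (src snk : V) (k : nat) (tau : nat -> V) :=
  [/\ (1 <= k)%N, tau 1%N = src, tau k = snk,
      forall i, (1 <= i < k)%N -> E (tau i) (tau i.+1)
    & forall i, (2 <= i <= k)%N -> f (tau i.-1) = ready (tau i)].

Definition overlap (a b a' b' : R) : R := Num.max 0 (Num.min b b' - Num.max a a').

Definition idle_len (a b : R) (v : V) : R :=
  Num.max 0 (b - a) -
  \sum_(j < n | v \in X j) overlap a b (seg_start j) (seg_end j).

Definition fpath (tau : nat -> V) (i : nat) : R := if i is 0 then 0 else f (tau i).

Definition y_len (tau : nat -> V) (i : nat) : R :=
  idle_len (fpath tau i.-1) (fpath tau i) (tau i).

Definition Y_type (k : nat) (tau : nat -> V) (s : S) : R :=
  \sum_(1 <= i < k.+1 | gamma (tau i) == s) y_len tau i.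

Definition ivs (k : nat) (tau : nat -> V) (s : S) : {set V} :=
  \bigcup_(1 <= i < k.+1 | gamma (tau i) == s) par (tau i).

End Exec.
End TypedDAG.

(* Main.v *)
Require Import Defs.
From mathcomp Require Import all_boot all_order all_algebra.
From mathcomp Require Import lra.
Import Order.TTheory GRing.Theory Num.Theory.
Local Open Scope ring_scope.

Ltac ovpre := rewrite ?maxEle ?minEle; repeat case: ifPn; move=> *;
  repeat match goal with H : is_true (~~ _) |- _ => rewrite -ltNge in H end.
Ltac ovt := ovpre; lra.

Section Aux.
Variable R : realFieldType.

Lemma ov_split (a b p q r : R) : p <= q -> q <= r ->
  overlap a b p q + overlap a b q r = overlap a b p r.
Proof.
move=> h1 h2; rewrite /overlap; ovt.
Qed.

Lemma ov_ge0 (a b p q : R) : 0 <= overlap a b p q.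
Proof. by rewrite /overlap le_max; apply/orP; left. Qed.

Lemma ov_sym (a b p q : R) : overlap a b p q = overlap p q a b.
Proof. by rewrite /overlap (minC b) (maxC a). Qed.

Lemma ov_le (a b p q : R) : p <= q -> overlap a b p q <= q - p.
Proof.
move=> h; rewrite /overlap; ovt.
Qed.

Lemma ov_empty (a b p : R) : overlap a a p b = 0.
Proof.
rewrite /overlap; ovt.
Qed.

Lemma ov_full (a b T : R) : 0 <= a -> (a < b -> b <= T) ->
  Num.max 0 (b - a) <= overlap a b 0 T.
Proof.
move=> h0 h; rewrite /overlap.
case: (ltP a b) => hab; [have := h hab|]; move=> *; ovt.
Qed.

Lemma ov_pos (a b p q : R) : 0 < overlap a b p q ->
  [/\ a <= Num.max a p, p <= Num.max a p, Num.max a p < b & Num.max a p < q].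
Proof.
rewrite /overlap; ovpre; split; lra.
Qed.

Lemma chain (P : nat -> R) (m : nat) (a b : R) :
  (forall i, (i < m)%N -> P i <= P i.+1) ->
  \sum_(i < m) overlap (P i) (P i.+1) a b = overlap (P 0%N) (P m) a b.
Proof.
elim: m => [|m IH] hP.
  by rewrite big_ord0 ov_empty.
have mono : forall j, (j <= m)%N -> P 0%N <= P j.
  elim=> [|j IHj] hj; first by [].
  apply: le_trans (IHj (ltnW hj)) (hP _ (leqW hj)).
rewrite big_ord_recr /= IH; last by move=> i hi; apply: hP; apply: leqW.
rewrite ![overlap _ _ a b]ov_sym ov_split //; first exact: mono.
exact: hP.
Qed.

End Aux.

Section Main.
Variables (R : realFieldType) (V S : finType) (E : rel V) (gamma : V -> S)
  (c : V -> R) (M : S -> nat) (src snk : V)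
  (n : nat) (d : 'I_n -> R) (X : 'I_n -> {set V}) (f : V -> R)
  (k : nat) (tau : nat -> V).

Lemma bigmax_ge (r : seq V) (P : pred V) (F : V -> R) x :
  x \in r -> P x -> F x <= \big[Num.max/0]_(u <- r | P u) F u.
Proof.
elim: r => //= y r IH; rewrite inE big_cons; case/orP => [/eqP<- Px| xr Px].
  by rewrite Px le_max; apply/orP; left.
case: ifP => _; last exact: IH.
by rewrite le_max (IH xr Px) orbT.
Qed.

Lemma ready_ge0 v : 0 <= ready E f v.
Proof.
rewrite /ready; elim: (index_enum V) => [|x r IH]; first by rewrite big_nil.
rewrite big_cons; case: ifP => _ //.
by rewrite le_max IH orbT.
Qed.

Lemma edge_ready u v : E u v -> f u <= ready E f v.
Proof. by move=> h; apply: bigmax_ge => //; rewrite mem_index_enum. Qed.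

Definition Pseg (m : nat) : R := \sum_(l < n | (l < m)%N) d l.

Hypothesis dpos : forall j, 0 < d j.

Lemma Pseg_mono i j : (i <= j)%N -> Pseg i <= Pseg j.
Proof.
move=> hij; rewrite /Pseg [X in _ <= X]big_mkcond [X in X <= _]big_mkcond.
apply: ler_sum => l _.
case: ifP => h1; first by rewrite (leq_trans h1 hij).
by case: ifP => _ //; apply: ltW.
Qed.

Lemma Pseg0 : Pseg 0 = 0.
Proof. by rewrite /Pseg big_pred0. Qed.

Lemma seg_endE j : seg_end d j = Pseg j.+1.
Proof.
rewrite /seg_end /Pseg /seg_start [RHS](bigD1 j) //= addrC; congr (_ + _).
by apply: eq_bigl => l; rewrite ltnS ltn_neqAle andbC.
Qed.

Lemma seg_start_ge0 j : 0 <= seg_start d j.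
Proof. by rewrite /seg_start sumr_ge0 // => i _; apply: ltW. Qed.

Lemma seg_sum (a b : R) :
  \sum_(j < n) overlap a b (seg_start d j) (seg_end d j) = overlap a b 0 (Pseg n).
Proof.
transitivity (overlap a b (Pseg 0) (Pseg n)); last by rewrite Pseg0.
rewrite ov_sym -(@chain _ Pseg n a b); last first.
  by move=> i _; apply: Pseg_mono; apply: leqnSn.
by apply: eq_bigr => j _; rewrite seg_endE ov_sym.
Qed.

Hypothesis exec3 : forall j v, v \in X j -> ready E f v <= seg_start d j /\ seg_end d j <= f v.
Hypothesis exec5 : forall v, f v = ready E f v \/ exists j, v \in X j /\ f v = seg_end d j.

Lemma ready_le_f v : ready E f v <= f v.
Proof.
case: (exec5 v) => [->//|[j [hj ->]]].
case: (exec3 j v hj) => h1 _; apply: le_trans h1 _.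
by rewrite /seg_end lerDl ltW.
Qed.

Lemma path_ready p u : path E u p -> p != [::] -> f u <= ready E f (last u p).
Proof.
elim: p u => //= x p IH u /andP[hux hp] _.
have h1 := edge_ready _ _ hux.
case: p IH hp => [|y p] IH hp //=.
apply: le_trans h1 _; apply: le_trans (ready_le_f x) _.
exact: (IH x hp).
Qed.

Lemma conn_ready u v : connect E u v -> u != v -> f u <= ready E f v.
Proof.
move/connectP=> [p hp ->]; case: p hp => [|x p] hp; first by rewrite eqxx.
by move=> _; apply: path_ready.
Qed.

End Main.

Theorem lemma2 (R : realFieldType) (V S : finType) (E : rel V)
    (gamma : V -> S) (c : V -> R) (M : S -> nat) (src snk : V)
    (n : nat) (d : 'I_n -> R) (X : 'I_n -> {set V}) (f : V -> R)
    (k : nat) (tau : nat -> V) :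
  typed_dag_task E c src snk ->
  (forall s, (1 <= M s)%N) ->
  execution_sequence E gamma c M d X f ->
  critical_path E f src snk k tau ->
  forall s : S,
    Y_type gamma d X f k tau s <=
    (M s)%:R^-1 * \sum_(v in ivs E gamma k tau s) c v.
Proof.
move=> [acyc usrc usnk c_ge0] M1 [[dpos loadM exec3 exec4 exec5] wc] [k1 t1 tk tE tready] s.
set A := ivs E gamma k tau s.
have rlf := @ready_le_f _ _ E _ d X f dpos exec3 exec5.
have crd := @conn_ready _ _ E _ d X f dpos exec3 exec5.
have readysrc : ready E f src = 0.
  by rewrite /ready big_pred0 // => u; apply/negbTE; apply: (proj2 (usrc src) erefl u).
have Qready : forall i, (1 <= i <= k)%N -> Defs.fpath f tau i.-1 = ready E f (tau i).
  case=> [|[|i]] //= hi; first by rewrite t1 readysrc.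
  exact: (tready i.+2 hi).
have Qf : forall i, (1 <= i)%N -> Defs.fpath f tau i = f (tau i) by case.
have Qmono : forall i, (i < k)%N -> Defs.fpath f tau i <= Defs.fpath f tau i.+1.
  move=> i hi; have -> : Defs.fpath f tau i = ready E f (tau i.+1) by apply: (Qready i.+1); rewrite hi.
  rewrite Qf //; exact: rlf.
have par_sub : forall i, (1 <= i <= k)%N -> gamma (tau i) == s -> par E gamma (tau i) \subset A.
  move=> i hi hg; rewrite /A /ivs big_mkcond (bigD1_seq i) /= ?mem_index_iota ?iota_uniq //.
  by rewrite hg; apply: subsetUl.
have per_j : forall j, \sum_(1 <= i < k.+1 | gamma (tau i) == s)
    overlap (Defs.fpath f tau i.-1) (Defs.fpath f tau i) (seg_start d j) (seg_end d j) <= d j.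
  move=> j.
  apply: le_trans (_ : \sum_(1 <= i < k.+1)
    overlap (Defs.fpath f tau i.-1) (Defs.fpath f tau i) (seg_start d j) (seg_end d j) <= _).
    rewrite [X in _ <= X](bigID (fun i => gamma (tau i) == s)) /= lerDl sumr_ge0 // => i _.
    exact: ov_ge0.
  rewrite big_add1 /= big_mkord.
  rewrite (@chain _ (Defs.fpath f tau) k) //.
  have := dpos j; rewrite /seg_end => hd.
  have h : seg_start d j <= seg_start d j + d j by lra.
  have := @ov_le _ (Defs.fpath f tau 0) (Defs.fpath f tau k) _ _ h; lra.
have per_i : forall i, (1 <= i <= k)%N -> gamma (tau i) = s ->
    (M s)%:R * y_len d X f tau i <= \sum_j \sum_(v | (v \in A) && (v \in X j))
      overlap (Defs.fpath f tau i.-1) (Defs.fpath f tau i) (seg_start d j) (seg_end d j).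
  move=> i hi hg.
  have hi1 : (1 <= i)%N by case/andP: hi.
  have ha := Qready i hi; have hb := Qf i hi1.
  rewrite /y_len /idle_len.
  move: ha hb.
  set a := Defs.fpath f tau i.-1; set b := Defs.fpath f tau i => ha hb.
  have step1 : Num.max 0 (b - a) - \sum_(j < n | tau i \in X j) overlap a b (seg_start d j) (seg_end d j)
      <= \sum_(j < n | tau i \notin X j) overlap a b (seg_start d j) (seg_end d j).
    have hsum := @seg_sum _ _ d dpos a b.
    rewrite (bigID (fun j => tau i \in X j)) /= in hsum.
    have hfull : Num.max 0 (b - a) <= overlap a b 0 (Pseg R n d n).
      apply: ov_full; first by rewrite ha; apply: ready_ge0.
      move=> hab; case: (exec5 (tau i)) => [he|[j [_ he]]]; first by move: hab; rewrite ha hb he; lra.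
      rewrite hb he seg_endE; apply: Pseg_mono => //; exact: ltn_ord.
    lra.
  have step2 : forall j, tau i \notin X j -> (M s)%:R * overlap a b (seg_start d j) (seg_end d j)
      <= \sum_(v | (v \in A) && (v \in X j)) overlap a b (seg_start d j) (seg_end d j).
    move=> j hj.
    case: (lerP (overlap a b (seg_start d j) (seg_end d j)) 0) => hov.
      have -> : overlap a b (seg_start d j) (seg_end d j) = 0.
        by apply/le_anti; rewrite hov ov_ge0.
      by rewrite mulr0 big1.
    case: (ov_pos _ _ _ _ _ hov); set t := Num.max a (seg_start d j) => h1 h2 h3 h4.
    have hwc := wc j t (tau i).
    have hwc' : (M s <= load gamma X j s)%N.
      rewrite -hg; apply: hwc => //; apply/andP; split => //; rewrite -?ha -?hb //.
    set B := [set v | (v \in A) && (v \in X j)].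
    have sub : [set v in X j | gamma v == s] \subset B.
      apply/subsetP => v; rewrite !inE => /andP[vX /eqP gv]; rewrite vX andbT.
      have nv : v != tau i by apply/eqP => e; move: hj; rewrite -e vX.
      apply: (subsetP (par_sub i hi _)); first by rewrite hg.
      rewrite inE; apply/and4P; split => //; first by rewrite gv hg.
        apply/negP => hc; have := crd _ _ hc nv; case: (exec3 j v vX) => _ h5; lra.
      apply/negP => hc; have := crd _ _ hc; rewrite eq_sym => /(_ nv).
      case: (exec3 j v vX) => h5 _; lra.
    rewrite (eq_bigl (fun v => v \in B)); last by move=> v; rewrite inE.
    rewrite sumr_const -[X in _ <= X]mulr_natl ler_pM2r //.
    rewrite ler_nat; apply: leq_trans hwc' (subset_leq_card sub).
  apply: le_trans (_ : (M s)%:R * \sum_(j < n | tau i \notin X j) overlap a b (seg_start d j) (seg_end d j) <= _).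
    by apply: ler_wpM2l.
  rewrite mulr_sumr.
  apply: le_trans (_ : \sum_(j < n | tau i \notin X j) \sum_(v | (v \in A) && (v \in X j))
      overlap a b (seg_start d j) (seg_end d j) <= _).
    by apply: ler_sum => j hj; apply: step2.
  rewrite [X in _ <= X](bigID (fun j => tau i \notin X j)) /= lerDl sumr_ge0 // => j _.
  by apply: sumr_ge0 => v _; apply: ov_ge0.
have Mpos : 0 < (M s)%:R :> R by rewrite ltr0n M1.
rewrite -(ler_pM2l Mpos) mulrA mulfV ?mul1r ?gt_eqF //.
rewrite /Y_type mulr_sumr.
apply: le_trans (_ : \sum_(1 <= i < k.+1 | gamma (tau i) == s) \sum_j \sum_(v | (v \in A) && (v \in X j))
      overlap (Defs.fpath f tau i.-1) (Defs.fpath f tau i) (seg_start d j) (seg_end d j) <= _).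
  rewrite big_nat_cond [X in _ <= X]big_nat_cond.
  apply: ler_sum => i /andP[hi /eqP hg]; exact: per_i.
rewrite exchange_big /=.
apply: le_trans (_ : \sum_j \sum_(v | (v \in A) && (v \in X j)) d j <= _).
  apply: ler_sum => j _; rewrite exchange_big /=; apply: ler_sum => v _; exact: per_j.
rewrite (exchange_big_dep (fun v => v \in A)) /=; last by move=> j v _ /andP[].
apply: ler_sum => v vA; apply: le_trans (exec4 v).
by rewrite (eq_bigl (fun j => v \in X j)) // => j; rewrite vA.
Qed.
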